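(* Let $\mu=4m^2>0$ and let $\mathcal{M}(\tilde z,a)$ be the crossing-symmetric $2\to2$ scattering amplitude of identical scalars of mass $m$ in a unitary theory, admitting the crossing-symmetric dispersive representation and the power series expansion described in the context. Then for every real $a\in\left(-\frac{2\mu}{9},0\right)\cup\left(0,\frac{4\mu}{9}\right)$, $\alpha_1(a)\neq 0$ and $$\left|\frac{\alpha_n(a)\,a^{2n}}{\alpha_1(a)\,a^2}\right|\le n\qquad\text{for all } n\ge 2.$$
   Context: Shifted Mandelstam variables $s_1=s-\mu/3$, $s_2=t-\mu/3$, $s_3=u-\mu/3$ satisfy $s_1+s_2+s_3=0$. Crossing-symmetric variables $(z,a)$, $a$ real, are defined by $s_k=a-\frac{a(z-z_k)^3}{z^3-1}$, $k=1,2,3$, with $z_k$ the cube roots of unity, and $\tilde z=z^3$. The amplitude, written as $\mathcal{M}(\tilde z,a)$, is assumed to satisfy $$\mathcal{M}(\tilde z,a)=\alpha_0+\frac1\pi\int_{2\mu/3}^\infty\frac{ds_1'}{s_1'}\,\mathcal{A}\left(s_1';s_2^{(+)}(s_1',a)\right)H(s_1',\tilde z),$$ where $\alpha_0=\mathcal{M}(0,a)$, $H(s_1',\tilde z)=\frac{27a^2\tilde z(2s_1'-3a)}{27a^3\tilde z-27a^2\tilde z s_1'-(1-\tilde z)^2(s_1')^3}$, $s_2^{(+)}(s_1',a)=-\frac{s_1'}{2}\left[1-\left(\frac{s_1'+3a}{s_1'-a}\right)^{1/2}\right]$, and $\mathcal{A}(s_1;s_2)$ is the $s$-channel absorptive part;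 and $\mathcal{M}$ has a power series $\mathcal{M}(\tilde z,a)=\sum_{n\ge0}\alpha_n(a)a^{2n}\tilde z^n$ converging on $|\tilde z|<1$. Unitarity means: $\mathcal{A}\left(s_1;s_2^{(+)}(s_1,a)\right)=\Phi(s_1;\alpha)\sum_{\ell\ge0}(2\ell+2\alpha)a_\ell(s_1)C_\ell^{(\alpha)}\left(\sqrt{\xi(s_1,a)}\right)$ with $\alpha=(d-3)/2$ ($d$ the spacetime dimension), $\Phi>0$, $C_\ell^{(\alpha)}$ Gegenbauer polynomials, $\xi(s_1,a)=\left(1+\frac{2s_2^{(+)}(s_1,a)+2\mu/3}{s_1-2\mu/3}\right)^2$, and $0\le a_\ell(s_1)\le1$ for $s_1\ge2\mu/3$. *)

(* Defs.v *)
From Stdlib Require Import Reals.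
From Coquelicot Require Import Coquelicot.
Open Scope R_scope.

(* Gegenbauer polynomials C_l^{(al)}(x), via the standard three-term recurrence
   C_0 = 1, C_1 = 2 al x,
   (n+1) C_{n+1} = 2 (n+al) x C_n - (n + 2 al - 1) C_{n-1}. *)
Fixpoint gegen_pair (al x : R) (n : nat) : R * R :=
  match n with
  | O => (1, 2 * al * x)
  | S k => let (c0, c1) := gegen_pair al x k in
           (c1, (2 * (INR k + 1 + al) * x * c1 - (INR k + 2 * al) * c0) / (INR k + 2))
  end.
Definition gegenbauer (n : nat) (al x : R) : R := fst (gegen_pair al x n).

Definition gegen_index (d : nat) : R := (INR d - 3) / 2.

Definition s2plus (s1 a : R) : R :=
  - s1 / 2 * (1 - sqrt ((s1 + 3 * a) / (s1 - a))).

Definition xi (mu s1 a : R) : R :=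
  (1 + (2 * s2plus s1 a + 2 * mu / 3) / (s1 - 2 * mu / 3)) ^ 2.

Definition Hker (a s : R) (z : C) : C :=
  ((27 * a ^ 2 * (2 * s - 3 * a))%R * z /
   ((27 * a ^ 3)%R * z - (27 * a ^ 2 * s)%R * z - (1 - z) * (1 - z) * (s ^ 3)%R))%C.

(* Main.v *)
Require Import Defs.
From Stdlib Require Import Reals Lra Psatz FunctionalExtensionality.
From Coquelicot Require Import Coquelicot.
Open Scope R_scope.

Lemma gegen_pair_inv (al x : R) (n : nat) :
  1/2 <= al -> 1 <= x ->
  0 <= fst (gegen_pair al x n) <= snd (gegen_pair al x n).
Proof.
  intros Hal Hx. induction n as [|k IH]; simpl.
  - nra.
  - destruct (gegen_pair al x k) as [c0 c1]. simpl in *.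
    assert (Hk : 0 <= INR k) by apply pos_INR.
    split; [lra|].
    apply (Rmult_le_reg_r (INR k + 2)); [lra|].
    unfold Rdiv. rewrite Rmult_assoc, Rinv_l by lra.
    assert (H1 : 0 <= (INR k + 1 + al) * ((x - 1) * c1)) by (apply Rmult_le_pos; [lra|apply Rmult_le_pos; lra]).
    assert (H2 : 0 <= (INR k + 2 * al) * (c1 - c0)) by (apply Rmult_le_pos; lra).
    lra.
Qed.

Lemma gegen_nonneg (n : nat) (al x : R) :
  1/2 <= al -> 1 <= x -> 0 <= gegenbauer n al x.
Proof. intros. unfold gegenbauer. apply gegen_pair_inv; auto. Qed.

Lemma series_nonneg (u : nat -> R) (SS : R) :
  (forall n, 0 <= u n) -> is_series u SS -> 0 <= SS.
Proof.
  intros Hu HS.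
  assert (H : is_lim_seq (sum_n u) SS) by exact HS.
  assert (H0 : is_lim_seq (fun _ => 0) 0) by apply is_lim_seq_const.
  assert (Hle := is_lim_seq_le (fun _ => 0) (sum_n u) 0 SS).
  simpl in Hle. apply Hle; auto.
  intros n. rewrite sum_n_Reals. induction n; simpl; auto.
  specialize (Hu (S n)). lra.
Qed.

Lemma xi_ge1 (mu s a : R) :
  0 < mu -> ((- (2 * mu / 9) < a < 0) \/ (0 < a < 4 * mu / 9)) ->
  2 * mu / 3 <= s -> 1 <= sqrt (xi mu s a).
Proof.
  intros Hmu Ha Hs. unfold xi.
  set (c := 2 * mu / 3) in *.
  assert (Hnum : 0 <= 2 * s2plus s a + 2 * mu / 3).
  { unfold s2plus.
    set (r := sqrt ((s + 3 * a) / (s - a))).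
    assert (E : 2 * (- s / 2 * (1 - r)) + 2 * mu / 3 = s * r - s + c) by (unfold c; field).
    rewrite E.
    destruct Ha as [Ha|Ha].
    -
      assert (Hsa : 0 < s - a) by lra.
      assert (Hs3 : 0 < s + 3 * a) by (unfold c in Hs; lra).
      assert (Hr : (s - c) / s <= r).
      { unfold r. rewrite <- (sqrt_pow2 ((s - c) / s)).
        2:{ apply Rmult_le_pos; [lra|]. left; apply Rinv_0_lt_compat; unfold c in *; lra. }
        apply sqrt_le_1_alt.
        assert (Hs0 : 0 < s) by (unfold c in *; lra).
        apply (Rmult_le_reg_r (s^2 * (s - a))).
        { apply Rmult_lt_0_compat; [nra|lra]. }
        replace (((s - c) / s) ^ 2 * (s ^ 2 * (s - a))) with ((s-c)^2 * (s - a)) by (field; lra).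
        replace ((s + 3 * a) / (s - a) * (s ^ 2 * (s - a))) with ((s + 3*a) * s^2) by (field; lra).
        assert (Hb : 3 * (-a) < c) by (unfold c; lra).
        assert (Hc0 : 0 < c) by (unfold c; lra).
        assert (H1: 0 <= s - c) by lra.
        assert (K1 : 0 <= c^2 * (c + 3*a)) by (apply Rmult_le_pos; nra).
        assert (K2 : 0 <= 3 * c * (s - c) * (c + 2*a)) by (apply Rmult_le_pos; [apply Rmult_le_pos|]; nra).
        assert (K3 : 0 <= (s-c)^2 * (2*c + 4*a)) by (apply Rmult_le_pos; nra).
        clear -K1 K2 K3. 
        assert (E : (s + 3 * a) * s ^ 2 - (s - c) ^ 2 * (s - a) = c^2 * (c + 3*a) + 3 * c * (s - c) * (c + 2*a) + (s-c)^2 * (2*c + 4*a)) by ring.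
        lra. }
      assert (Hs0 : 0 < s) by (unfold c in *; lra).
      apply (Rmult_le_compat_l s) in Hr; [|lra].
      replace (s * ((s - c) / s)) with (s - c) in Hr by (field; lra). lra.
    - assert (Hsa : 0 < s - a) by (unfold c in Hs; lra).
      assert (Hr : 1 <= r).
      { unfold r. rewrite <- sqrt_1. apply sqrt_le_1_alt.
        apply (Rmult_le_reg_r (s - a)); [lra|].
        unfold Rdiv. rewrite Rmult_assoc, Rinv_l by lra. lra. }
      assert (Hs0 : 0 < s) by (unfold c in *; lra).
      assert (0 <= s * (r - 1)) by (apply Rmult_le_pos; lra). unfold c in *. lra. }
  assert (Ht : 0 <= (2 * s2plus s a + 2 * mu / 3) / (s - 2 * mu / 3)).
  { destruct (Req_dec s c) as [E|E].
    - fold c. rewrite E. replace (c - c) with 0 by ring. unfold Rdiv. rewrite Rinv_0. lra.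
    - apply Rmult_le_pos; auto. left. apply Rinv_0_lt_compat. fold c. lra. }
  unfold c in *. rewrite sqrt_pow2 by lra. lra.
Qed.

Lemma RInt_gen_snd (f : R -> C) (c : R) (l : C) :
  is_RInt_gen f (at_point c) (Rbar_locally p_infty) l ->
  is_RInt_gen (fun t => snd (f t)) (at_point c) (Rbar_locally p_infty) (snd l).
Proof.
  unfold is_RInt_gen. intros H P [eps HP].
  assert (HQ : locally l (fun w : C => ball (snd l) eps (snd w))).
  { exists eps. intros w [_ Hw]. exact Hw. }
  specialize (H _ HQ). unfold filtermapi in *.
  eapply filter_imp; [|exact H].
  intros ab [y [Hy1 Hy2]]. exists (snd y). split.
  - exact (is_RInt_fct_extend_snd (U := R_NormedModule) (V := R_NormedModule) f _ _ y Hy1).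
  - apply HP. exact Hy2.
Qed.

Lemma RInt_gen_nonneg (g : R -> R) (c l : R) :
  (forall s, c <= s -> 0 <= g s) ->
  is_RInt_gen g (at_point c) (Rbar_locally p_infty) l -> 0 <= l.
Proof.
  intros Hg Hl.
  assert (Hfp : forall (P : R * R -> Prop), (forall x y, x = c -> c < y -> P (x, y)) ->
      filter_prod (at_point c) (Rbar_locally p_infty) P).
  { intros P HP. apply (Filter_prod _ _ _ (fun x => x = c) (fun y => c < y)).
    - reflexivity.
    - exists c. auto.
    - intros x y Hx Hy. apply HP; auto. }
  assert (Hn : norm l <= l).
  { apply (RInt_gen_norm (V := R_CompleteNormedModule) (Fa := at_point c) (Fb := Rbar_locally p_infty) g g l l); auto.
    - apply Hfp. intros x y -> Hy. simpl. lra.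
    - apply Hfp. intros x y -> Hy. simpl. intros s Hs.
      rewrite <- (Rabs_pos_eq (g s)) at 2 by (apply Hg; lra). apply Rle_refl. }
  assert (Hn2 : 0 <= norm l) by apply norm_ge_0.
  lra.
Qed.

Definition D1 a s x y := 27*a^3*x - 27*a^2*s*x - s^3*(1 - 2*x + x^2 - y^2).
Definition D2 a s x y := 27*a^3*y - 27*a^2*s*y - s^3*(-2*y + 2*x*y).
Lemma Hker_im a s x y : snd (Hker a s (x,y)) =
  27*a^2*(2*s-3*a) * (-(s^3) * y * (1 - x^2 - y^2)) * / ((D1 a s x y)^2 + (D2 a s x y)^2).
Proof.
  unfold Hker, Cdiv, Cmult, Cinv, Cminus, Cplus, Copp, RtoC. cbn [fst snd].
  match goal with |- context[Rdiv _ ?q] =>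
    assert (Eq : q = (D1 a s x y)^2 + (D2 a s x y)^2) by (unfold D1, D2; ring); rewrite !Eq end.
  unfold Rdiv, D1, D2.
  match goal with |- context[/ ?q] => generalize (/ q) end.
  intro iq. ring.
Qed.

Lemma Rinv_nonneg q : 0 <= q -> 0 <= / q.
Proof.
  intros H. destruct (Req_dec q 0) as [->|E]. rewrite Rinv_0; lra.
  left. apply Rinv_0_lt_compat. lra.
Qed.

Definition gim (A : R -> R -> R) a x y s :=
  snd (((A s (s2plus s a) / s)%R : C) * Hker a s (x,y))%C.

Lemma gim_eq A a x y s : gim A a x y s =
  (A s (s2plus s a) / s) * (27*a^2*(2*s-3*a) * (-(s^3) * y * (1 - x^2 - y^2)) * / ((D1 a s x y)^2 + (D2 a s x y)^2)).
Proof.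
  unfold gim. rewrite <- Hker_im. destruct (Hker a s (x,y)) as [h1 h2].
  unfold Cmult, RtoC. cbn [fst snd]. ring.
Qed.

Lemma gim_odd A a x y s : gim A a x (-y) s = - gim A a x y s.
Proof.
  rewrite !gim_eq.
  replace (D1 a s x (-y)) with (D1 a s x y) by (unfold D1; ring).
  replace (D2 a s x (-y) ^ 2) with (D2 a s x y ^ 2) by (unfold D2; ring).
  ring.
Qed.

Lemma gim_sign A a x y s : 0 < s -> 3 * a <= 2 * s -> 0 <= A s (s2plus s a) ->
  0 <= y -> x^2 + y^2 < 1 -> gim A a x y s <= 0.
Proof.
  intros Hs Ha HA Hy Hxy. rewrite gim_eq.
  assert (H1 : 0 <= A s (s2plus s a) / s) by (apply Rmult_le_pos; [lra| left; apply Rinv_0_lt_compat; lra]).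
  assert (H2 : 0 <= 27*a^2*(2*s-3*a)) by (apply Rmult_le_pos; [nra|lra]).
  assert (H3 : 0 <= (s^3) * y * (1 - x^2 - y^2)) by (apply Rmult_le_pos; [apply Rmult_le_pos; [apply pow_le; lra|lra]|lra]).
  assert (H4 : 0 <= / ((D1 a s x y)^2 + (D2 a s x y)^2)) by (apply Rinv_nonneg; nra).
  assert (0 <= A s (s2plus s a) / s * (27*a^2*(2*s-3*a) * ((s^3) * y * (1 - x^2 - y^2)) * / ((D1 a s x y)^2 + (D2 a s x y)^2))).
  { apply Rmult_le_pos; auto. apply Rmult_le_pos; auto. apply Rmult_le_pos; auto. }
  replace (- s ^ 3 * y * (1 - x ^ 2 - y ^ 2)) with (- (s ^ 3 * y * (1 - x ^ 2 - y ^ 2))) by ring.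
  lra.
Qed.

Lemma disp_sign (A : R -> R -> R) (M : C -> R -> C) (a mu : R) :
  0 < mu -> ((- (2 * mu / 9) < a < 0) \/ (0 < a < 4 * mu / 9)) ->
  (forall s, 2 * mu / 3 <= s -> 0 <= A s (s2plus s a)) ->
  (forall z : C, Cmod z < 1 ->
     exists I : C,
       is_RInt_gen (fun s : R => ((A s (s2plus s a) / s)%R * Hker a s z)%C)
                   (at_point (2 * mu / 3)) (Rbar_locally p_infty) I /\
       M z a = (M 0%C a + (/ PI)%R * I)%C) ->
  forall x y, x^2 + y^2 < 1 ->
    (0 <= y -> snd (M (x,y) a) - snd (M 0%C a) <= 0) /\
    snd (M (x,-y) a) - snd (M 0%C a) = - (snd (M (x,y) a) - snd (M 0%C a)).
Proof.
  intros Hmu Ha HA Hdisp x y Hxy.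
  assert (Hc1 : forall u v, u^2 + v^2 < 1 -> Cmod (u,v) < 1).
  { intros u v H. unfold Cmod. cbn [fst snd]. rewrite <- sqrt_1. apply sqrt_lt_1_alt. split; [nra|lra]. }
  destruct (Hdisp (x,y) (Hc1 x y Hxy)) as [I1 [HI1 HM1]].
  destruct (Hdisp (x,-y) (Hc1 x (-y) ltac:(nra))) as [I2 [HI2 HM2]].
  apply RInt_gen_snd in HI1. apply RInt_gen_snd in HI2.
  fold (gim A a x y) in HI1. fold (gim A a x (-y)) in HI2.
  assert (E1 : snd (M (x,y) a) - snd (M 0%C a) = / PI * snd I1).
  { rewrite HM1. destruct I1 as [i1 i2]. unfold Cplus, Cmult, RtoC. cbn [fst snd]. ring. }
  assert (E2 : snd (M (x,-y) a) - snd (M 0%C a) = / PI * snd I2).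
  { rewrite HM2. destruct I2 as [i1 i2]. unfold Cplus, Cmult, RtoC. cbn [fst snd]. ring. }
  rewrite E1, E2.
  assert (HPI : 0 < / PI) by (apply Rinv_0_lt_compat; apply PI_RGT_0).
  split.
  - intros Hy.
    apply (is_RInt_gen_opp (Fa := at_point (2 * mu / 3)) (Fb := Rbar_locally p_infty)) in HI1.
    apply RInt_gen_nonneg in HI1.
    + change (0 <= - snd I1) in HI1. nra.
    + intros s Hs. change (0 <= - gim A a x y s).
      assert (gim A a x y s <= 0); [|lra].
      apply gim_sign; [lra | destruct Ha; lra | apply HA; lra | exact Hy | exact Hxy].
  - apply (is_RInt_gen_opp (Fa := at_point (2 * mu / 3)) (Fb := Rbar_locally p_infty)) in HI1.
    assert (HI1' : is_RInt_gen (gim A a x (-y)) (at_point (2 * mu / 3)) (Rbar_locally p_infty) (opp (snd I1))).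
    { replace (gim A a x (-y)) with (fun s => opp (gim A a x y s)). exact HI1.
      apply functional_extensionality. intros s. rewrite gim_odd. reflexivity. }
    assert (U1 := is_RInt_gen_unique (V := R_CompleteNormedModule) _ _ HI1').
    assert (U2 := is_RInt_gen_unique (V := R_CompleteNormedModule) _ _ HI2).
    rewrite U1 in U2. rewrite <- U2. change (opp (snd I1)) with (- snd I1). ring.
Qed.

Lemma snd_sum_n (a : nat -> C) N :
  snd (sum_n a N) = sum_f_R0 (fun m => snd (a m)) N.
Proof.
  induction N as [|N IH].
  - rewrite sum_O. reflexivity.
  - rewrite sum_Sn. simpl. rewrite <- IH. reflexivity.
Qed.

Lemma fst_sum_n (a : nat -> C) N :
  fst (sum_n a N) = sum_f_R0 (fun m => fst (a m)) N.
Proof.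
  induction N as [|N IH].
  - rewrite sum_O. reflexivity.
  - rewrite sum_Sn. simpl. rewrite <- IH. reflexivity.
Qed.

Lemma is_series_snd (a : nat -> C) (l : C) :
  is_series a l -> Un_cv (fun N => sum_f_R0 (fun m => snd (a m)) N) (snd l).
Proof.
  intros H. apply is_lim_seq_Reals.
  apply (is_lim_seq_ext (fun N => snd (sum_n a N))).
  { intros N. apply snd_sum_n. }
  unfold is_lim_seq. intros P HP. simpl in HP. destruct HP as [eps HP].
  apply (H (fun w : C => P (snd w))). exists eps. intros w [_ Hw]. apply HP. exact Hw.
Qed.

Lemma is_series_fst (a : nat -> C) (l : C) :
  is_series a l -> Un_cv (fun N => sum_f_R0 (fun m => fst (a m)) N) (fst l).
Proof.
  intros H. apply is_lim_seq_Reals.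
  apply (is_lim_seq_ext (fun N => fst (sum_n a N))).
  { intros N. apply fst_sum_n. }
  unfold is_lim_seq. intros P HP. simpl in HP. destruct HP as [eps HP].
  apply (H (fun w : C => P (fst w))). exists eps. intros w [Hw _]. apply HP. exact Hw.
Qed.

Definition zt (r t : R) : C := (r * cos t, r * sin t).

Lemma demoivre (r t : R) (m : nat) :
  pow_n (zt r t) m = ((r ^ m * cos (INR m * t), r ^ m * sin (INR m * t)) : C).
Proof.
  unfold zt. induction m as [|m IH].
  - simpl. rewrite Rmult_0_l, cos_0, sin_0. unfold one. simpl. unfold RtoC. f_equal; ring.
  - simpl pow_n. rewrite IH. rewrite S_INR.
    replace ((INR m + 1) * t) with (t + INR m * t) by ring.
    rewrite cos_plus, sin_plus. unfold mult. simpl. unfold Cmult. simpl. f_equal; ring.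
Qed.

Lemma cterm_snd (c : C) (r t : R) (m : nat) :
  snd (c * pow_n (zt r t) m)%C =
  r ^ m * (fst c * sin (INR m * t) + snd c * cos (INR m * t)).
Proof.
  rewrite demoivre. destruct c as [c1 c2]. unfold Cmult. simpl. ring.
Qed.

Lemma cterm_real (c : C) (r : R) (m : nat) :
  (c * pow_n (RtoC r) m)%C = ((fst c * r ^ m, snd c * r ^ m) : C).
Proof.
  induction m as [|m IH].
  - simpl. unfold one; simpl. destruct c. unfold Cmult, RtoC. simpl. f_equal; ring.
  - destruct c as [c1 c2]. simpl in *.
    assert (E : pow_n (RtoC r) m = ((r ^ m, 0) : C)).
    { clear IH. induction m as [|m IHm]; [reflexivity|].
      simpl. rewrite IHm. unfold mult; simpl. unfold Cmult; simpl. f_equal; ring. }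
    rewrite E. unfold mult; simpl. unfold Cmult; simpl. f_equal; ring.
Qed.

Lemma partial_diff (t : nat -> R) (qq : R) (N0 N : nat) :
  0 <= qq < 1 -> (N0 <= N)%nat -> (forall m, (N0 <= m)%nat -> Rabs (t m) <= qq ^ m) ->
  forall j, Rabs (sum_f_R0 t (N + j) - sum_f_R0 t N) <= qq ^ (S N) * (1 - qq ^ j) / (1 - qq).
Proof.
  intros Hq HN Ht j. induction j as [|j IH].
  - rewrite Nat.add_0_r. replace (sum_f_R0 t N - sum_f_R0 t N) with 0 by ring.
    rewrite Rabs_R0. simpl. replace (1 - 1) with 0 by ring. unfold Rdiv. rewrite Rmult_0_r, Rmult_0_l. lra.
  - replace (N + S j)%nat with (S (N + j)) by lia. simpl sum_f_R0 at 1.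
    replace (sum_f_R0 t (N + j) + t (S (N + j)) - sum_f_R0 t N) with
      ((sum_f_R0 t (N + j) - sum_f_R0 t N) + t (S (N + j))) by ring.
    eapply Rle_trans; [apply Rabs_triang|].
    assert (H1 := Ht (S (N + j)) ltac:(lia)).
    replace (qq ^ S (N + j)) with (qq ^ S N * qq ^ j) in H1 by (rewrite <- pow_add; f_equal; lia).
    replace (qq ^ S N * (1 - qq ^ S j) / (1 - qq)) with (qq ^ S N * (1 - qq ^ j) / (1 - qq) + qq ^ S N * qq ^ j)
      by (simpl; field; lra).
    lra.
Qed.

Lemma tail_bound (t : nat -> R) (U qq : R) (N0 N : nat) :
  0 <= qq < 1 -> (N0 <= N)%nat -> (forall m, (N0 <= m)%nat -> Rabs (t m) <= qq ^ m) ->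
  Un_cv (fun K => sum_f_R0 t K) U ->
  Rabs (U - sum_f_R0 t N) <= qq ^ (S N) / (1 - qq).
Proof.
  intros Hq HN Ht Hcv.
  apply Rnot_lt_le. intros Hlt.
  set (d := Rabs (U - sum_f_R0 t N) - qq ^ (S N) / (1 - qq)).
  assert (Hd : 0 < d) by (unfold d; lra).
  destruct (Hcv d Hd) as [K HK].
  specialize (HK (N + K)%nat ltac:(lia)). unfold R_dist in HK.
  assert (H2 := partial_diff t qq N0 N Hq HN Ht K).
  assert (Hqj : 0 <= qq ^ S N * qq ^ K).
  { apply Rmult_le_pos; apply pow_le; lra. }
  assert (H3 : qq ^ S N * (1 - qq ^ K) / (1 - qq) <= qq ^ S N / (1 - qq)).
  { unfold Rdiv. apply Rmult_le_compat_r. left; apply Rinv_0_lt_compat; lra.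
    assert (0 <= qq ^ K) by (apply pow_le; lra).
    assert (0 <= qq ^ S N) by (apply pow_le; lra). nra. }
  assert (H4 : Rabs (U - sum_f_R0 t N) <= Rabs (sum_f_R0 t (N + K) - U) + Rabs (sum_f_R0 t (N + K) - sum_f_R0 t N)).
  { replace (U - sum_f_R0 t N) with (- (sum_f_R0 t (N + K) - U) + (sum_f_R0 t (N + K) - sum_f_R0 t N)) by ring.
    eapply Rle_trans; [apply Rabs_triang|]. rewrite Rabs_Ropp. lra. }
  unfold d in *. lra.
Qed.

Lemma sin_nPI (k : nat) : sin (INR k * PI) = 0.
Proof.
  induction k as [|k IH].
  - simpl. rewrite Rmult_0_l. apply sin_0.
  - rewrite S_INR. replace ((INR k + 1) * PI) with (INR k * PI + PI) by ring.
    rewrite sin_plus, IH, sin_PI. ring.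
Qed.

Lemma is_RInt_lin (f g : R -> R) (a b If Ig al be : R) :
  is_RInt f a b If -> is_RInt g a b Ig ->
  is_RInt (fun t => al * f t + be * g t) a b (al * If + be * Ig).
Proof.
  intros Hf Hg.
  exact (is_RInt_plus (V:=R_NormedModule) _ _ a b _ _ (is_RInt_scal _ _ _ al _ Hf) (is_RInt_scal _ _ _ be _ Hg)).
Qed.

Lemma is_RInt_ext' (f g : R -> R) (a b I1 I2 : R) :
  (forall t, f t = g t) -> I1 = I2 -> is_RInt f a b I1 -> is_RInt g a b I2.
Proof.
  intros H E Hf. subst. apply (is_RInt_ext f). intros; apply H. exact Hf.
Qed.

Lemma int_cos_nat (k : nat) :
  is_RInt (fun t => cos (INR k * t)) (-PI) PI (if (k =? 0)%nat then 2 * PI else 0).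
Proof.
  destruct k as [|k].
  - simpl. apply (is_RInt_ext' (fun _ => 1) _ _ _ (scal (PI - - PI) 1)).
    + intros t. rewrite Rmult_0_l, cos_0. reflexivity.
    + unfold scal; simpl. unfold mult; simpl. ring.
    + exact (is_RInt_const (V:=R_NormedModule) _ _ _).
  - simpl (S k =? 0)%nat.
    assert (Hk : 0 < INR (S k)) by (apply lt_0_INR; lia).
    set (kk := INR (S k)) in *.
    apply (is_RInt_ext' (fun t => cos (kk * t)) _ _ _ (minus (sin (kk * PI) / kk) (sin (kk * - PI) / kk))).
    + intros; reflexivity.
    + unfold minus, plus, opp; simpl. unfold kk. replace (INR (S k) * - PI) with (- (INR (S k) * PI)) by ring.
      rewrite sin_neg, sin_nPI. field. fold kk. lra.
    + apply (is_RInt_derive (V:=R_CompleteNormedModule) (fun t => sin (kk * t) / kk)).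
      * intros x _. auto_derive; auto. field. lra.
      * intros x _. apply continuity_pt_filterlim. reg.
Qed.

Lemma int_sin_nat (k : nat) :
  is_RInt (fun t => sin (INR k * t)) (-PI) PI 0.
Proof.
  destruct k as [|k].
  - apply (is_RInt_ext' (fun _ => 0) _ _ _ (scal (PI - - PI) 0)).
    + intros t. simpl. rewrite Rmult_0_l, sin_0. reflexivity.
    + unfold scal; simpl. unfold mult; simpl. ring.
    + exact (is_RInt_const (V:=R_NormedModule) _ _ _).
  - assert (Hk : 0 < INR (S k)) by (apply lt_0_INR; lia).
    set (kk := INR (S k)) in *.
    apply (is_RInt_ext' (fun t => sin (kk * t)) _ _ _ (minus (- cos (kk * PI) / kk) (- cos (kk * - PI) / kk))).
    + intros; reflexivity.
    + unfold minus, plus, opp; simpl. replace (kk * - PI) with (- (kk * PI)) by ring.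
      rewrite cos_neg. field. lra.
    + apply (is_RInt_derive (V:=R_CompleteNormedModule) (fun t => - cos (kk * t) / kk)).
      * intros x _. auto_derive; auto. field. lra.
      * intros x _. apply continuity_pt_filterlim. reg.
Qed.

Lemma int_cos_z (m n : nat) :
  is_RInt (fun t => cos ((INR m - INR n) * t)) (-PI) PI (if (m =? n)%nat then 2 * PI else 0).
Proof.
  destruct (Compare_dec.le_lt_dec n m) as [H|H].
  - apply (is_RInt_ext' (fun t => cos (INR (m - n) * t)) _ _ _ (if (m - n =? 0)%nat then 2 * PI else 0)).
    + intros t. rewrite minus_INR by lia. reflexivity.
    + destruct (Nat.eqb_spec m n); destruct (Nat.eqb_spec (m - n) 0); auto; exfalso; lia.
    + apply int_cos_nat.
  - apply (is_RInt_ext' (fun t => cos (INR (n - m) * t)) _ _ _ (if (n - m =? 0)%nat then 2 * PI else 0)).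
    + intros t. rewrite minus_INR by lia. rewrite <- cos_neg. f_equal. ring.
    + destruct (Nat.eqb_spec m n); destruct (Nat.eqb_spec (n - m) 0); auto; exfalso; lia.
    + apply int_cos_nat.
Qed.

Lemma int_sin_z (m n : nat) :
  is_RInt (fun t => sin ((INR m - INR n) * t)) (-PI) PI 0.
Proof.
  destruct (Compare_dec.le_lt_dec n m) as [H|H].
  - apply (is_RInt_ext' (fun t => sin (INR (m - n) * t)) _ _ _ 0).
    + intros t. rewrite minus_INR by lia. reflexivity.
    + reflexivity.
    + apply int_sin_nat.
  - apply (is_RInt_ext' (fun t => (-1) * sin (INR (n - m) * t) + 0 * sin (INR (n - m) * t)) _ _ _ ((-1) * 0 + 0 * 0)).
    + intros t. rewrite minus_INR by lia. rewrite <- (Ropp_involutive (sin _)), <- sin_neg.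
      replace (- ((INR n - INR m) * t)) with ((INR m - INR n) * t) by ring. ring.
    + ring.
    + apply is_RInt_lin; apply int_sin_nat.
Qed.

Lemma int_SS (m n : nat) : (1 <= n)%nat ->
  is_RInt (fun t => sin (INR m * t) * sin (INR n * t)) (-PI) PI (if (m =? n)%nat then PI else 0).
Proof.
  intros Hn.
  apply (is_RInt_ext' (fun t => (1/2) * cos ((INR m - INR n) * t) + (-1/2) * cos (INR (m + n) * t)) _ _ _
     ((1/2) * (if (m =? n)%nat then 2 * PI else 0) + (-1/2) * (if (m + n =? 0)%nat then 2 * PI else 0))).
  - intros t. rewrite plus_INR.
    replace ((INR m - INR n) * t) with (INR m * t - INR n * t) by ring.
    replace ((INR m + INR n) * t) with (INR m * t + INR n * t) by ring.
    rewrite cos_minus, cos_plus. field.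
  - replace (m + n =? 0)%nat with false by (symmetry; apply Nat.eqb_neq; lia).
    destruct (m =? n)%nat; field.
  - apply is_RInt_lin; [apply int_cos_z | apply int_cos_nat].
Qed.

Lemma int_CC (m n : nat) : (1 <= n)%nat ->
  is_RInt (fun t => cos (INR m * t) * cos (INR n * t)) (-PI) PI (if (m =? n)%nat then PI else 0).
Proof.
  intros Hn.
  apply (is_RInt_ext' (fun t => (1/2) * cos ((INR m - INR n) * t) + (1/2) * cos (INR (m + n) * t)) _ _ _
     ((1/2) * (if (m =? n)%nat then 2 * PI else 0) + (1/2) * (if (m + n =? 0)%nat then 2 * PI else 0))).
  - intros t. rewrite plus_INR.
    replace ((INR m - INR n) * t) with (INR m * t - INR n * t) by ring.
    replace ((INR m + INR n) * t) with (INR m * t + INR n * t) by ring.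
    rewrite cos_minus, cos_plus. field.
  - replace (m + n =? 0)%nat with false by (symmetry; apply Nat.eqb_neq; lia).
    destruct (m =? n)%nat; field.
  - apply is_RInt_lin; [apply int_cos_z | apply int_cos_nat].
Qed.

Lemma int_CS (m n : nat) :
  is_RInt (fun t => cos (INR m * t) * sin (INR n * t)) (-PI) PI 0.
Proof.
  apply (is_RInt_ext' (fun t => (1/2) * sin ((INR n - INR m) * t) + (1/2) * sin (INR (n + m) * t)) _ _ _
     ((1/2) * 0 + (1/2) * 0)).
  - intros t. rewrite plus_INR.
    replace ((INR n - INR m) * t) with (INR n * t - INR m * t) by ring.
    replace ((INR n + INR m) * t) with (INR n * t + INR m * t) by ring.
    rewrite sin_minus, sin_plus. field.
  - ring.
  - apply is_RInt_lin; [apply int_sin_z | apply int_sin_nat].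
Qed.

Lemma is_RInt_sum (F : nat -> R -> R) (I : nat -> R) (a b : R) (N : nat) :
  (forall m, is_RInt (F m) a b (I m)) ->
  is_RInt (fun t => sum_f_R0 (fun m => F m t) N) a b (sum_f_R0 I N).
Proof.
  intros H. induction N as [|N IH].
  - simpl. apply H.
  - simpl. apply (is_RInt_ext' (fun t => 1 * sum_f_R0 (fun m => F m t) N + 1 * F (S N) t) _ _ _
      (1 * sum_f_R0 I N + 1 * I (S N))).
    + intros; ring.
    + ring.
    + apply is_RInt_lin; auto.
Qed.

Lemma sum_delta0 (v : nat -> R) (n N : nat) : (N < n)%nat ->
  sum_f_R0 (fun m => if (m =? n)%nat then v m else 0) N = 0.
Proof.
  intros H. induction N as [|N IH].
  - cbn [sum_f_R0]. replace (0 =? n)%nat with false by (symmetry; apply Nat.eqb_neq; lia). reflexivity.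
  - cbn [sum_f_R0]. rewrite IH by lia. replace (S N =? n)%nat with false by (symmetry; apply Nat.eqb_neq; lia). ring.
Qed.

Lemma sum_delta (v : nat -> R) (n N : nat) : (n <= N)%nat ->
  sum_f_R0 (fun m => if (m =? n)%nat then v m else 0) N = v n.
Proof.
  intros H. induction N as [|N IH].
  - assert (n = 0%nat) by lia. subst. reflexivity.
  - destruct (Nat.eq_dec n (S N)) as [E|E].
    + subst. cbn [sum_f_R0]. rewrite Nat.eqb_refl. rewrite sum_delta0 by lia. ring.
    + cbn [sum_f_R0]. rewrite IH by lia.
      replace (S N =? n)%nat with false by (symmetry; apply Nat.eqb_neq; lia). ring.
Qed.

Definition SN (r : R) (p q : nat -> R) (N : nat) (t : R) :=
  sum_f_R0 (fun m => r ^ m * (p m * sin (INR m * t) + q m * cos (INR m * t))) N.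
Definition EN (r : R) (q : nat -> R) (N : nat) (t : R) :=
  sum_f_R0 (fun m => 2 * r ^ m * q m * cos (INR m * t)) N.

Lemma EN_eq r p q N t : EN r q N t = SN r p q N t + SN r p q N (-t).
Proof.
  unfold EN, SN. induction N as [|N IH]; cbn [sum_f_R0].
  - replace (INR 0 * - t) with (- (INR 0 * t)) by ring. rewrite sin_neg, cos_neg. ring.
  - rewrite IH. replace (INR (S N) * - t) with (- (INR (S N) * t)) by ring. rewrite sin_neg, cos_neg. ring.
Qed.

Lemma sum_mult_r (f : nat -> R) N c : sum_f_R0 f N * c = sum_f_R0 (fun i => f i * c) N.
Proof. rewrite Rmult_comm, scal_sum. reflexivity. Qed.

Lemma int_SN_sin r p q N n : (1 <= n)%nat -> (n <= N)%nat ->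
  is_RInt (fun t => SN r p q N t * sin (INR n * t)) (-PI) PI (PI * (r ^ n * p n)).
Proof.
  intros H1 H2.
  apply (is_RInt_ext' (fun t => sum_f_R0 (fun m => (r ^ m * p m) * (sin (INR m * t) * sin (INR n * t))
                                            + (r ^ m * q m) * (cos (INR m * t) * sin (INR n * t))) N) _ _ _
           (sum_f_R0 (fun m => (r ^ m * p m) * (if (m =? n)%nat then PI else 0) + (r ^ m * q m) * 0) N)).
  - intros t. unfold SN. rewrite sum_mult_r. apply sum_eq. intros i _. ring.
  - rewrite <- (sum_delta (fun m => PI * (r ^ m * p m)) n N H2). apply sum_eq. intros i _.
    destruct (i =? n)%nat; ring.
  - apply (is_RInt_sum (fun m t => (r ^ m * p m) * (sin (INR m * t) * sin (INR n * t))
                                            + (r ^ m * q m) * (cos (INR m * t) * sin (INR n * t)))).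
    intros m. apply is_RInt_lin; [apply int_SS; auto | apply int_CS].
Qed.

Lemma int_EN_cos r q N n : (1 <= n)%nat -> (n <= N)%nat ->
  is_RInt (fun t => EN r q N t * cos (INR n * t)) (-PI) PI (PI * (2 * r ^ n * q n)).
Proof.
  intros H1 H2.
  apply (is_RInt_ext' (fun t => sum_f_R0 (fun m => (2 * r ^ m * q m) * (cos (INR m * t) * cos (INR n * t))
                                            + 0 * (cos (INR m * t) * cos (INR n * t))) N) _ _ _
           (sum_f_R0 (fun m => (2 * r ^ m * q m) * (if (m =? n)%nat then PI else 0) + 0 * (if (m =? n)%nat then PI else 0)) N)).
  - intros t. unfold EN. rewrite sum_mult_r. apply sum_eq. intros i _. ring.
  - rewrite <- (sum_delta (fun m => PI * (2 * r ^ m * q m)) n N H2). apply sum_eq. intros i _.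
    destruct (i =? n)%nat; ring.
  - apply (is_RInt_sum (fun m t => (2 * r ^ m * q m) * (cos (INR m * t) * cos (INR n * t))
                                            + 0 * (cos (INR m * t) * cos (INR n * t)))).
    intros m. apply is_RInt_lin; apply int_CC; auto.
Qed.

Lemma sin_mult_bound (n : nat) (t : R) : Rabs (sin (INR n * t)) <= INR n * Rabs (sin t).
Proof.
  induction n as [|n IH].
  - simpl. rewrite Rmult_0_l, sin_0, Rabs_R0. lra.
  - rewrite S_INR. replace ((INR n + 1) * t) with (INR n * t + t) by ring.
    rewrite sin_plus. eapply Rle_trans; [apply Rabs_triang|].
    rewrite !Rabs_mult.
    assert (Hc1 := COS_bound t). assert (Hc2 := COS_bound (INR n * t)).
    assert (Rabs (cos t) <= 1) by (apply Rabs_le; lra).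
    assert (Rabs (cos (INR n * t)) <= 1) by (apply Rabs_le; lra).
    assert (0 <= Rabs (sin (INR n * t))) by apply Rabs_pos.
    assert (0 <= Rabs (sin t)) by apply Rabs_pos.
    nra.
Qed.

Lemma pointwise_bound (V v s sn nn e : R) :
  Rabs (V - v) <= e -> 0 <= v * s -> Rabs s <= 1 -> Rabs sn <= nn * Rabs s -> 0 <= nn ->
  V * sn <= nn * (V * s) + nn * (2 * e) /\ - (V * sn) <= nn * (V * s) + nn * (2 * e).
Proof.
  intros H1 H2 H3 H4 H5.
  assert (He : 0 <= e) by (eapply Rle_trans; [apply Rabs_pos|exact H1]).
  assert (Hvs : - e <= V * s).
  { replace (V * s) with (v * s + (V - v) * s) by ring.
    assert (Rabs ((V - v) * s) <= e).
    { rewrite Rabs_mult. assert (0 <= Rabs (V - v)) by apply Rabs_pos.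
      assert (0 <= Rabs s) by apply Rabs_pos. nra. }
    assert (Hb := Rabs_le_between ((V - v) * s) e). 
    destruct (Rabs_le_between ((V - v) * s) e) as [Ha _]. specialize (Ha H). lra. }
  assert (Habs : Rabs (V * s) <= V * s + 2 * e).
  { destruct (Rle_dec 0 (V * s)).
    - rewrite Rabs_pos_eq by lra. lra.
    - rewrite Rabs_left by lra. lra. }
  assert (Hsn : Rabs (V * sn) <= nn * Rabs (V * s)).
  { rewrite !Rabs_mult. assert (0 <= Rabs V) by apply Rabs_pos. nra. }
  assert (Hm : nn * Rabs (V * s) <= nn * (V * s + 2 * e)) by (apply Rmult_le_compat_l; auto).
  assert (Hx := Rle_abs (V * sn)). assert (Hy := Rle_abs (- (V * sn))). rewrite Rabs_Ropp in Hy.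
  split; nra.
Qed.

Lemma est_fixed (u : R -> R) (p q : nat -> R) (r e : R) (N n : nat) :
  (forall t, (u t - q 0%nat) * sin t <= 0) ->
  (forall t, u (-t) - q 0%nat = - (u t - q 0%nat)) ->
  (forall t, Rabs (u t - SN r p q N t) <= e) ->
  (1 <= n)%nat -> (n <= N)%nat ->
  Rabs (p n) * r ^ n <= INR n * (- r * p 1%nat + 4 * e) /\ Rabs (q n) * r ^ n <= 2 * e.
Proof.
  intros Hsg Hodd Htail H1 H2.
  assert (HPI := PI_RGT_0).
  assert (HPab : -PI <= PI) by lra.
  assert (He : 0 <= e) by (eapply Rle_trans; [apply Rabs_pos|apply (Htail 0)]).
  set (V := fun t => q 0%nat - SN r p q N t).
  assert (IV : forall k, (1 <= k)%nat -> (k <= N)%nat ->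
     is_RInt (fun t => V t * sin (INR k * t)) (-PI) PI (q 0%nat * 0 + (-1) * (PI * (r ^ k * p k)))).
  { intros k Hk1 Hk2. apply (is_RInt_ext' (fun t => q 0%nat * sin (INR k * t) + (-1) * (SN r p q N t * sin (INR k * t))) _ _ _ (q 0%nat * 0 + (-1) * (PI * (r ^ k * p k)))).
    - intros t. unfold V. ring.
    - reflexivity.
    - apply is_RInt_lin; [apply int_sin_nat | apply int_SN_sin; auto]. }
  assert (IB : is_RInt (fun t => INR n * (V t * sin (INR 1 * t)) + (INR n * (2 * e)) * 1) (-PI) PI
                 (INR n * (q 0%nat * 0 + (-1) * (PI * (r ^ 1 * p 1%nat))) + (INR n * (2 * e)) * (2 * PI))).
  { apply is_RInt_lin; [apply IV; lia|].
    apply (is_RInt_ext' (fun _ => 1) _ _ _ (scal (PI - - PI) 1)); [reflexivity| |exact (is_RInt_const (V:=R_NormedModule) _ _ _)].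
    unfold scal; simpl; unfold mult; simpl. ring. }
  assert (PW : forall t, V t * sin (INR n * t) <= INR n * (V t * sin (INR 1 * t)) + (INR n * (2 * e)) * 1 /\
                         - (V t * sin (INR n * t)) <= INR n * (V t * sin (INR 1 * t)) + (INR n * (2 * e)) * 1).
  { intros t. replace (INR 1 * t) with t by (simpl; ring). rewrite Rmult_1_r.
    apply (pointwise_bound (V t) (q 0%nat - u t)).
    - unfold V. replace (q 0%nat - SN r p q N t - (q 0%nat - u t)) with (u t - SN r p q N t) by ring. apply Htail.
    - specialize (Hsg t). nra.
    - assert (Hs := SIN_bound t). apply Rabs_le; lra.
    - apply sin_mult_bound.
    - apply pos_INR. }
  assert (Ip1 := is_RInt_le _ _ (-PI) PI _ _ HPab (IV n H1 H2) IB (fun t _ => proj1 (PW t))).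
  assert (IVn : is_RInt (fun t => (-1) * (V t * sin (INR n * t)) + 0 * (V t * sin (INR n * t))) (-PI) PI
                  ((-1) * (q 0%nat * 0 + (-1) * (PI * (r ^ n * p n))) + 0 * (q 0%nat * 0 + (-1) * (PI * (r ^ n * p n))))).
  { apply is_RInt_lin; apply IV; auto. }
  assert (Ip2 := is_RInt_le _ _ (-PI) PI _ _ HPab IVn IB (fun t _ => ltac:(destruct (PW t); lra))).
  simpl pow in Ip1, Ip2.
  split.
  - assert (Hr : PI * (Rabs (p n) * r ^ n) <= PI * (INR n * (- r * p 1%nat + 4 * e))).
    { destruct (Rle_dec 0 (p n)).
      - rewrite Rabs_pos_eq by lra. nra.
      - rewrite Rabs_left by lra. nra. }
    apply Rmult_le_reg_l in Hr; auto.
  -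
    set (E := fun t => EN r q N t - 2 * q 0%nat).
    assert (IE : is_RInt (fun t => E t * cos (INR n * t)) (-PI) PI ((-2 * q 0%nat) * 0 + 1 * (PI * (2 * r ^ n * q n)))).
    { apply (is_RInt_ext' (fun t => (-2 * q 0%nat) * cos (INR n * t) + 1 * (EN r q N t * cos (INR n * t))) _ _ _ ((-2 * q 0%nat) * 0 + 1 * (PI * (2 * r ^ n * q n)))).
      - intros t. unfold E. ring.
      - reflexivity.
      - apply is_RInt_lin.
        + assert (Hc := int_cos_nat n). replace (n =? 0)%nat with false in Hc by (symmetry; apply Nat.eqb_neq; lia). exact Hc.
        + apply int_EN_cos; auto. }
    assert (IC : is_RInt (fun t => (2 * e) * 1 + 0 * 1) (-PI) PI ((2 * e) * (2 * PI) + 0 * (2 * PI))).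
    { apply is_RInt_lin; apply (is_RInt_ext' (fun _ => 1) _ _ _ (scal (PI - - PI) 1)); try reflexivity;
        try exact (is_RInt_const (V:=R_NormedModule) _ _ _); unfold scal; simpl; unfold mult; simpl; ring. }
    assert (PE : forall t, Rabs (E t * cos (INR n * t)) <= (2 * e) * 1 + 0 * 1).
    { intros t. unfold E. rewrite (EN_eq r p q).
      rewrite Rabs_mult.
      assert (Hc : Rabs (cos (INR n * t)) <= 1) by (assert (Hcb := COS_bound (INR n * t)); apply Rabs_le; lra).
      assert (Hd : Rabs (SN r p q N t + SN r p q N (- t) - 2 * q 0%nat) <= 2 * e).
      { replace (SN r p q N t + SN r p q N (- t) - 2 * q 0%nat) with
          (- (u t - SN r p q N t) - (u (-t) - SN r p q N (-t)) + ((u t - q 0%nat) + (u (-t) - q 0%nat))) by ring.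
        rewrite (Hodd t). replace (u t - q 0%nat + - (u t - q 0%nat)) with 0 by ring. rewrite Rplus_0_r.
        eapply Rle_trans; [apply Rabs_triang|]. rewrite Rabs_Ropp, Rabs_Ropp.
        assert (Ha := Htail t). assert (Hb := Htail (-t)). lra. }
      assert (0 <= Rabs (SN r p q N t + SN r p q N (- t) - 2 * q 0%nat)) by apply Rabs_pos.
      assert (0 <= Rabs (cos (INR n * t))) by apply Rabs_pos.
      nra. }
    assert (Iq1 := is_RInt_le _ _ (-PI) PI _ _ HPab IE IC (fun t _ => ltac:(assert (Hx := PE t); assert (Hy := Rle_abs (E t * cos (INR n * t))); lra))).
    assert (IEn : is_RInt (fun t => (-1) * (E t * cos (INR n * t)) + 0 * (E t * cos (INR n * t))) (-PI) PI
                  ((-1) * ((-2 * q 0%nat) * 0 + 1 * (PI * (2 * r ^ n * q n))) + 0 * ((-2 * q 0%nat) * 0 + 1 * (PI * (2 * r ^ n * q n))))).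
    { apply is_RInt_lin; exact IE. }
    assert (Iq2 := is_RInt_le _ _ (-PI) PI _ _ HPab IEn IC (fun t _ => ltac:(assert (Hx := PE t); assert (Hy := Rle_abs (- (E t * cos (INR n * t)))); rewrite Rabs_Ropp in Hy; lra))).
    assert (Hr : PI * (Rabs (q n) * r ^ n) <= PI * (2 * e)).
    { destruct (Rle_dec 0 (q n)).
      - rewrite Rabs_pos_eq by lra. nra.
      - rewrite Rabs_left by lra. nra. }
    apply Rmult_le_reg_l in Hr; auto.
Qed.

Lemma le_eps (X Y : R) : (forall d, 0 < d -> X <= Y + d) -> X <= Y.
Proof.
  intros H. apply Rnot_lt_le. intros Hlt. specialize (H ((X - Y) / 2) ltac:(lra)). lra.
Qed.

Lemma typreal_est (u : R -> R) (p q : nat -> R) (r qq : R) (N0 : nat) :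
  0 < r -> 0 <= qq < 1 ->
  (forall t, (u t - q 0%nat) * sin t <= 0) ->
  (forall t, u (-t) - q 0%nat = - (u t - q 0%nat)) ->
  (forall N t, (N0 <= N)%nat -> Rabs (u t - SN r p q N t) <= qq ^ (S N) / (1 - qq)) ->
  forall n, (1 <= n)%nat -> Rabs (p n) * r ^ n <= INR n * (- r * p 1%nat) /\ q n = 0.
Proof.
  intros Hr Hq Hsg Hodd Htail n Hn.
  assert (Hsmall : forall d, 0 < d -> exists N, (N0 <= N)%nat /\ (n <= N)%nat /\ qq ^ (S N) / (1 - qq) < d).
  { intros d Hd.
    destruct (pow_lt_1_zero qq ltac:(rewrite Rabs_pos_eq; lra) (d * (1 - qq)) ltac:(nra)) as [K HK].
    exists (Nat.max N0 (Nat.max n K)). split; [lia|split; [lia|]].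
    specialize (HK (S (Nat.max N0 (Nat.max n K))) ltac:(lia)).
    rewrite Rabs_pos_eq in HK by (apply pow_le; lra).
    apply (Rmult_lt_reg_r (1 - qq)); [lra|]. unfold Rdiv. rewrite Rmult_assoc, Rinv_l by lra. lra. }
  assert (Hn0 : 0 < INR n) by (apply lt_0_INR; lia).
  split.
  - apply le_eps. intros d Hd.
    destruct (Hsmall (d / (4 * INR n))) as [N [HN1 [HN2 HN3]]].
    { apply Rdiv_lt_0_compat; lra. }
    destruct (est_fixed u p q r (qq ^ (S N) / (1 - qq)) N n Hsg Hodd (fun t => Htail N t HN1) Hn HN2) as [E1 _].
    assert (INR n * (4 * (qq ^ S N / (1 - qq))) <= d).
    { apply (Rmult_lt_compat_l (4 * INR n)) in HN3; [|lra].
      replace (4 * INR n * (d / (4 * INR n))) with d in HN3 by (field; lra). lra. }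
    nra.
  - assert (Hrn : 0 < r ^ n) by (apply pow_lt; lra).
    assert (Hq0 : Rabs (q n) * r ^ n <= 0).
    { apply le_eps. intros d Hd. rewrite Rplus_0_l.
      destruct (Hsmall (d / 2)) as [N [HN1 [HN2 HN3]]]; [lra|].
      destruct (est_fixed u p q r (qq ^ (S N) / (1 - qq)) N n Hsg Hodd (fun t => Htail N t HN1) Hn HN2) as [_ E2].
      lra. }
    assert (0 <= Rabs (q n)) by apply Rabs_pos.
    assert (Rabs (q n) = 0) by nra.
    destruct (Rle_dec 0 (q n)); [rewrite Rabs_pos_eq in * by lra | rewrite Rabs_left in * by lra]; lra.
Qed.

Lemma bernoulli_1m (dl : R) (n : nat) : 0 <= dl <= 1 -> 1 - INR n * dl <= (1 - dl) ^ n.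
Proof.
  intros H. induction n as [|n IH].
  - simpl. lra.
  - rewrite S_INR. simpl.
    assert (0 <= (1 - dl) ^ n) by (apply pow_le; lra).
    assert (0 <= INR n) by apply pos_INR.
    assert (0 <= INR n * dl * dl) by (apply Rmult_le_pos; [apply Rmult_le_pos|]; lra).
    nra.
Qed.

Lemma terms_to_0 (t : nat -> R) (l : R) :
  Un_cv (fun K => sum_f_R0 t K) l -> Un_cv t 0.
Proof.
  intros H. apply is_lim_seq_Reals. apply ex_series_lim_0.
  exists l. apply is_series_Reals. exact H.
Qed.

Lemma Cmod_pair0 (x : R) : Cmod ((x, 0) : C) = Rabs x.
Proof. apply (Cmod_R x). Qed.

Lemma cc_zero_alpha (al : C) (a : R) (k : nat) : a <> 0 ->
  (al * RtoC (a ^ k))%C = 0%C -> al = 0%C.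
Proof.
  intros Ha H. apply Cmod_eq_0.
  assert (E := f_equal Cmod H). rewrite Cmod_mult, Cmod_0, Cmod_R in E.
  assert (0 < Rabs (a ^ k)) by (apply Rabs_pos_lt; apply pow_nonzero; auto).
  assert (0 <= Cmod al) by apply Cmod_ge_0. nra.
Qed.

Lemma per_r (M : C -> R -> C) (cc : nat -> C) (a r : R) :
  (forall z : C, Cmod z < 1 -> is_series (fun n => (cc n * pow_n z n)%C) (M z a)) ->
  (forall x y, x^2 + y^2 < 1 ->
    (0 <= y -> snd (M (x,y) a) - snd (M 0%C a) <= 0) /\
    snd (M (x,-y) a) - snd (M 0%C a) = - (snd (M (x,y) a) - snd (M 0%C a))) ->
  snd (M 0%C a) = snd (cc 0%nat) ->
  0 < r < 1 ->
  forall n, (1 <= n)%nat ->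
    Rabs (fst (cc n)) * r ^ n <= INR n * (- r * fst (cc 1%nat)) /\ snd (cc n) = 0.
Proof.
  intros Hser DS H0 Hr.
  set (p := fun n => fst (cc n)). set (q := fun n => snd (cc n)).
  set (r' := (1 + r) / 2). set (qq := r / r').
  assert (Hr' : r < r' < 1) by (unfold r'; lra).
  assert (Hqq : 0 <= qq < 1).
  { unfold qq. split. apply Rmult_le_pos; [lra|left; apply Rinv_0_lt_compat; lra].
    apply (Rmult_lt_reg_r r'); [lra|]. unfold Rdiv. rewrite Rmult_assoc, Rinv_l by lra. lra. }
  assert (Hcr' : Cmod (RtoC r') < 1) by (rewrite Cmod_R, Rabs_pos_eq; lra).
  assert (Sr := Hser _ Hcr').
  assert (Hp0 : Un_cv (fun m => p m * r' ^ m) 0).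
  { apply (terms_to_0 _ (fst (M (RtoC r') a))).
    assert (U := is_series_fst _ _ Sr).
    intros eps Heps. destruct (U eps Heps) as [K HK]. exists K. intros k Hk.
    specialize (HK k Hk). rewrite <- (sum_eq (fun m => fst (cc m * pow_n (RtoC r') m)%C)). exact HK.
    intros i _. rewrite cterm_real. reflexivity. }
  assert (Hq0 : Un_cv (fun m => q m * r' ^ m) 0).
  { apply (terms_to_0 _ (snd (M (RtoC r') a))).
    assert (U := is_series_snd _ _ Sr).
    intros eps Heps. destruct (U eps Heps) as [K HK]. exists K. intros k Hk.
    specialize (HK k Hk). rewrite <- (sum_eq (fun m => snd (cc m * pow_n (RtoC r') m)%C)). exact HK.
    intros i _. rewrite cterm_real. reflexivity. }
  destruct (Hp0 (1/2) ltac:(lra)) as [K1 HK1].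
  destruct (Hq0 (1/2) ltac:(lra)) as [K2 HK2].
  set (N0 := Nat.max K1 K2).
  assert (Hterm : forall t m, (N0 <= m)%nat ->
     Rabs (r ^ m * (p m * sin (INR m * t) + q m * cos (INR m * t))) <= qq ^ m).
  { intros t m Hm.
    specialize (HK1 m ltac:(unfold N0 in Hm; lia)). specialize (HK2 m ltac:(unfold N0 in Hm; lia)).
    unfold R_dist in HK1, HK2. rewrite Rminus_0_r in HK1, HK2.
    assert (Er : r ^ m = qq ^ m * r' ^ m).
    { rewrite <- Rpow_mult_distr. f_equal. unfold qq. field. lra. }
    rewrite Er.
    assert (Hr'm : 0 < r' ^ m) by (apply pow_lt; lra).
    assert (Hqm : 0 <= qq ^ m) by (apply pow_le; lra).
    rewrite Rabs_mult, (Rabs_pos_eq (qq ^ m * r' ^ m)) by (apply Rmult_le_pos; lra).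
    assert (B : Rabs (p m * sin (INR m * t) + q m * cos (INR m * t)) * r' ^ m <= 1).
    { eapply Rle_trans. apply Rmult_le_compat_r; [lra|apply Rabs_triang].
      rewrite !Rabs_mult.
      assert (Hs : Rabs (sin (INR m * t)) <= 1) by (assert (Hb := SIN_bound (INR m * t)); apply Rabs_le; lra).
      assert (Hc : Rabs (cos (INR m * t)) <= 1) by (assert (Hb := COS_bound (INR m * t)); apply Rabs_le; lra).
      rewrite Rabs_mult, (Rabs_pos_eq (r' ^ m)) in HK1, HK2 by lra.
      assert (0 <= Rabs (p m)) by apply Rabs_pos. assert (0 <= Rabs (q m)) by apply Rabs_pos.
      assert (0 <= Rabs (sin (INR m * t))) by apply Rabs_pos. assert (0 <= Rabs (cos (INR m * t))) by apply Rabs_pos.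
      nra. }
    nra. }
  set (u := fun t => snd (M (zt r t) a)).
  assert (Hcz : forall t, Cmod (zt r t) < 1).
  { intros t. unfold Cmod, zt. cbn [fst snd].
    replace ((r * cos t) ^ 2 + (r * sin t) ^ 2) with (r ^ 2) by (rewrite <- (Rmult_1_r (r ^ 2)), <- (sin2_cos2 t); unfold Rsqr; ring).
    rewrite sqrt_pow2 by lra. lra. }
  assert (Htail : forall N t, (N0 <= N)%nat -> Rabs (u t - SN r p q N t) <= qq ^ (S N) / (1 - qq)).
  { intros N t HN.
    apply (tail_bound (fun m => r ^ m * (p m * sin (INR m * t) + q m * cos (INR m * t))) (u t) qq N0 N Hqq HN).
    - intros m Hm. apply Hterm. exact Hm.
    - assert (U := is_series_snd _ _ (Hser _ (Hcz t))).
      intros eps Heps. destruct (U eps Heps) as [K HK]. exists K. intros k Hk.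
      specialize (HK k Hk). rewrite <- (sum_eq (fun m => snd (cc m * pow_n (zt r t) m)%C)). exact HK.
      intros i _. rewrite cterm_snd. reflexivity. }
  assert (Hxy : forall t, (r * cos t) ^ 2 + (r * sin t) ^ 2 < 1).
  { intros t. replace ((r * cos t) ^ 2 + (r * sin t) ^ 2) with (r ^ 2) by (rewrite <- (Rmult_1_r (r ^ 2)), <- (sin2_cos2 t); unfold Rsqr; ring).
    nra. }
  assert (Hodd : forall t, u (-t) - q 0%nat = - (u t - q 0%nat)).
  { intros t. unfold u, q. rewrite <- H0. unfold zt. rewrite cos_neg, sin_neg.
    replace (r * - sin t) with (- (r * sin t)) by ring.
    apply (DS (r * cos t) (r * sin t) (Hxy t)). }
  assert (Hsg : forall t, (u t - q 0%nat) * sin t <= 0).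
  { intros t. unfold u, q. rewrite <- H0. unfold zt.
    destruct (Rle_dec 0 (sin t)) as [Hs|Hs].
    - assert (snd (M (r * cos t, r * sin t) a) - snd (M 0%C a) <= 0).
      { apply (DS (r * cos t) (r * sin t) (Hxy t)). apply Rmult_le_pos; lra. }
      nra.
    - assert (Hxy' : (r * cos t) ^ 2 + (- (r * sin t)) ^ 2 < 1) by (assert (Hh := Hxy t); nra).
      destruct (DS (r * cos t) (- (r * sin t)) Hxy') as [D1' D2'].
      rewrite Ropp_involutive in D2'.
      assert (snd (M (r * cos t, - (r * sin t)) a) - snd (M 0%C a) <= 0).
      { apply D1'. nra. }
      nra. }
  intros n Hn.
  exact (typreal_est u p q r qq N0 (proj1 Hr) Hqq Hsg Hodd Htail n Hn).
Qed.

Theorem theorem7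
  (m : R) (d : nat)
  (M : C -> R -> C)            (* amplitude M(ztilde, a) *)
  (alpha : nat -> R -> C)      (* coefficients alpha_n(a) *)
  (A : R -> R -> R)            (* s-channel absorptive part A(s1; s2) *)
  (Phi : R -> R)               (* Phi(s1; alpha) *)
  (pw : nat -> R -> R)         (* partial waves a_l(s1) *)
  (a : R) :
  let mu := 4 * m ^ 2 in
  0 < m ->
  (4 <= d)%nat ->
  ((- (2 * mu / 9) < a < 0) \/ (0 < a < 4 * mu / 9)) ->
  (* crossing-symmetric dispersive representation on the unit disk *)
  (forall z : C, Cmod z < 1 ->
     exists I : C,
       is_RInt_gen (fun s : R => ((A s (s2plus s a) / s)%R * Hker a s z)%C)
                   (at_point (2 * mu / 3)) (Rbar_locally p_infty) I /\
       M z a = (M 0%C a + (/ PI)%R * I)%C) ->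
  (* power series expansion converging on |ztilde| < 1 *)
  (forall z : C, Cmod z < 1 ->
     is_series (fun n : nat => (alpha n a * (a ^ (2 * n))%R * pow_n z n)%C) (M z a)) ->
  (* unitarity *)
  (forall s : R, 2 * mu / 3 <= s ->
     0 < Phi s /\
     (forall l : nat, 0 <= pw l s <= 1) /\
     exists S : R,
       is_series (fun l : nat =>
                    (2 * INR l + 2 * gegen_index d) * pw l s
                    * gegenbauer l (gegen_index d) (sqrt (xi mu s a))) S /\
       A s (s2plus s a) = Phi s * S) ->
  (* non-triviality: M(., a) is not constant *)
  (exists n : nat, (1 <= n)%nat /\ alpha n a <> 0%C) ->
  alpha 1%nat a <> 0%C /\
  forall n : nat, (2 <= n)%nat ->
    Cmod ((alpha n a * (a ^ (2 * n))%R) / (alpha 1%nat a * (a ^ 2)%R))%C <= INR n.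
Proof.
  intros mu Hm Hd Ha Hdisp Hser Hunit Hnt.
  assert (Hmu : 0 < mu) by (unfold mu; nra).
  assert (Hanz : a <> 0) by (destruct Ha; lra).
  assert (Hgi : 1/2 <= gegen_index d).
  { unfold gegen_index. apply le_INR in Hd. replace (INR 4) with 4 in Hd by (simpl; ring). lra. }
  assert (HA : forall s, 2 * mu / 3 <= s -> 0 <= A s (s2plus s a)).
  { intros s Hs. destruct (Hunit s Hs) as [HPhi [Hpw [S [HS HAS]]]]. rewrite HAS.
    apply Rmult_le_pos; [lra|]. refine (series_nonneg _ S _ HS). intros l.
    assert (0 <= INR l) by apply pos_INR.
    apply Rmult_le_pos; [apply Rmult_le_pos|].
    - lra.
    - apply Hpw.
    - apply gegen_nonneg; auto. apply xi_ge1; auto. }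
  assert (DS := disp_sign A M a mu Hmu Ha HA Hdisp).
  set (cc := fun n => (alpha n a * RtoC (a ^ (2 * n)))%C).
  assert (Hser' : forall z : C, Cmod z < 1 -> is_series (fun n => (cc n * pow_n z n)%C) (M z a)).
  { intros z Hz. exact (Hser z Hz). }
  assert (H0 : snd (M 0%C a) = snd (cc 0%nat)).
  { assert (Hc0 : Cmod (RtoC 0) < 1) by (rewrite Cmod_R, Rabs_R0; lra).
    assert (U := is_series_snd _ _ (Hser' _ Hc0)).
    assert (U' : Un_cv (fun _ => snd (cc 0%nat)) (snd (M (RtoC 0) a))).
    { intros eps Heps. destruct (U eps Heps) as [K HK]. exists K. intros k Hk.
      specialize (HK k Hk).
      replace (sum_f_R0 (fun m0 => snd (cc m0 * pow_n (RtoC 0) m0)%C) k) with (snd (cc 0%nat)) in HK; auto.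
      clear. induction k as [|k IH].
      - cbn [sum_f_R0]. rewrite cterm_real. simpl. ring.
      - cbn [sum_f_R0]. rewrite <- IH. rewrite cterm_real. simpl. ring. }
    apply (UL_sequence _ _ _ U'). intros eps Heps. exists 0%nat. intros. unfold R_dist. rewrite Rminus_eq_0, Rabs_R0. lra. }
  assert (Hper := fun r => per_r M cc a r Hser' DS H0).
  set (p := fun n => fst (cc n)).
  assert (Hq : forall n, (1 <= n)%nat -> snd (cc n) = 0).
  { intros n Hn. exact (proj2 (Hper (1/2) ltac:(lra) n Hn)). }
  assert (Hp1 : p 1%nat <= 0).
  { destruct (Hper (1/2) ltac:(lra) 1%nat (le_n 1)) as [E _]. unfold p.
    simpl INR in E. simpl pow in E.
    assert (Hx := Rle_abs (fst (cc 1%nat))). lra. }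
  assert (Hpn : forall n, (1 <= n)%nat -> Rabs (p n) <= INR n * (- p 1%nat)).
  { intros n Hn. apply Rnot_lt_le. intros Hlt.
    set (X := Rabs (p n)) in *. set (B := INR n * (- p 1%nat)) in *.
    assert (Hn0 : 0 < INR n) by (apply lt_0_INR; lia).
    assert (HB : 0 <= B) by (unfold B; nra).
    set (dl := (X - B) / (2 * INR n * X)).
    assert (HX : 0 < X) by lra.
    assert (Hdl : 0 < dl) by (unfold dl; apply Rdiv_lt_0_compat; nra).
    assert (Hndl : INR n * dl * X = (X - B) / 2) by (unfold dl; field; lra).
    assert (Hdl1 : dl <= 1/2).
    { assert (INR n * dl <= 1/2) by (apply (Rmult_le_reg_r X); [lra|]; nra).
      assert (1 <= INR n) by (replace 1 with (INR 1) by reflexivity; apply le_INR; lia).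
      nra. }
    destruct (Hper (1 - dl) ltac:(lra) n Hn) as [E _]. change (fst (cc n)) with (p n) in E. change (fst (cc 1%nat)) with (p 1%nat) in E. change (Rabs (p n)) with X in E.
    assert (Hb := bernoulli_1m dl n ltac:(lra)).
    assert (E2 : INR n * (- (1 - dl) * p 1%nat) <= B) by (unfold B; nra).
    nra. }
  assert (Hcc : forall n, (1 <= n)%nat -> cc n = RtoC (p n)).
  { intros n Hn. unfold p. rewrite (surjective_pairing (cc n)), (Hq n Hn). reflexivity. }
  assert (Ha1 : alpha 1%nat a <> 0%C).
  { intros H1.
    assert (Ecc1 : cc 1%nat = 0%C) by (unfold cc; rewrite H1; apply Cmult_0_l).
    assert (Ep1 : p 1%nat = 0) by (unfold p; rewrite Ecc1; reflexivity).
    destruct Hnt as [n [Hn Han]]. apply Han.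
    apply (cc_zero_alpha _ a (2 * n) Hanz).
    fold (cc n). rewrite (Hcc n Hn).
    assert (Hz := Hpn n Hn). rewrite Ep1 in Hz.
    assert (Hpz : p n = 0).
    { assert (Hr := Rabs_pos (p n)). assert (Rabs (p n) = 0) by nra.
      destruct (Rle_dec 0 (p n)); [rewrite Rabs_pos_eq in * by lra | rewrite Rabs_left in * by lra]; lra. }
    rewrite Hpz. reflexivity. }
  split; [exact Ha1|].
  intros n Hn.
  change ((alpha n a * RtoC (a ^ (2 * n)))%C) with (cc n).
  change ((alpha 1%nat a * RtoC (a ^ 2))%C) with (cc 1%nat).
  assert (Hc1 : cc 1%nat <> 0%C).
  { intros E. apply Ha1. exact (cc_zero_alpha _ a (2 * 1) Hanz E). }
  rewrite Cmod_div by exact Hc1.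
  rewrite (Hcc n ltac:(lia)), (Hcc 1%nat (le_n 1)) in *.
  rewrite !Cmod_R.
  assert (Hp1' : p 1%nat <> 0) by (intros E; apply Hc1; rewrite E; reflexivity).
  rewrite (Rabs_left (p 1%nat)) by lra.
  assert (Hb := Hpn n ltac:(lia)).
  apply (Rmult_le_reg_r (- p 1%nat)); [lra|].
  unfold Rdiv. rewrite Rmult_assoc, Rinv_l by lra. lra.
Qed.
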